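(* There is an orientation of $\mathbb{RP}^3$ such that for every edge-face $\sigma$ and every $\mathrm{PGL}(4)$-class $[\mathcal{F}]$ of tetrahedra of flags, the projective tetrahedron $\mathrm{T}_{\mathcal{F}}$ associated to the $\sigma$-standard representative $\mathcal{F}$ of $[\mathcal{F}]$ is positively oriented, i.e. the simplicial identification of the standard simplex with $\mathrm{T}_{\mathcal{F}}$ sending the $m$-th vertex to $V_m$ is orientation preserving.
   Context: A flag is $(V,\eta)$, $\eta$ a plane of $\mathbb{RP}^3$ through the point $V$; non-degenerate tuples satisfy $\eta_i(V_j)=0\iff i=j$. A tetrahedron of flags $\mathcal{F}=(V_m,\eta_m)_{m=1}^4$ is a non-degenerate ordered quadruple of flags with $V_m$ not coplanar such that there is a (necessarily unique) projective tetrahedron $\mathrm{T}_{\mathcal{F}}$ with vertices $V_1,\dots,V_4$ whose interior misses every $\eta_m$. Edge-faces $\sigma=(ij)k$ are even permutations $[ijkl]$ of $\{1,2,3,4\}$. With $t_\sigma=t_{ijk}$, $e_\sigma=e_{ij}$ the triple and edge ratios ($t_{ijk}=\frac{\bar\eta_i(\bar V_j)\bar\eta_j(\bar V_k)\bar\eta_k(\bar V_i)}{\bar\eta_i(\bar V_k)\bar\eta_j(\bar V_i)\bar\eta_k(\bar V_j)}$, $e_{ij}=\frac{\bar\eta_i(\bar V_k)\bar\eta_j(\bar V_l)}{\bar\eta_i(\bar V_l)\bar\eta_j(\bar V_k)}$), the $\sigma$-standard representative of $[\mathcal{F}]$ is the unique representative with $(V_i,\eta_i)=([e_1],[e_2^*])$,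 $(V_j,\eta_j)=([e_2],[e_1^*])$, $(V_k,\eta_k)=([e_1+e_2+e_3],[t_\sigma e_1^*+e_2^*-(t_\sigma+1)e_3^*])$, $V_l=[e_\sigma e_1+e_2+X_\sigma e_3-e_4]$, $\eta_l=[e_{il}e_{lj}e_1^*+e_2^*-\bar\mu e_3^*+\bar\mu(Y-X_\sigma)e_4^*]$, where $\mu_\sigma=e_{jk}e_{ki}-e_{jk}+1$, $\bar\mu=e_{il}e_{lj}-e_{il}+1$, $X_\sigma=\mu_\sigma t_\sigma e_\sigma/(t_\sigma+1)$, $Y=(t_{jil}+1)/(t_{jil}\bar\mu)$ (existence and uniqueness of this representative is known). *)

(* Defs.v *)
(* Projective 3-space over an arbitrary real field R
   (in particular the reals); points and planes of RP^3 are represented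
   by nonzero lifts in R^4 (row vectors) resp. (R^4)^* (row vectors,
   paired with points by the standard dot product). *)
From HB Require Import structures.
From mathcomp Require Import all_boot all_order all_algebra all_fingroup.
Set Implicit Arguments. Unset Strict Implicit. Unset Printing Implicit Defensive.
Import Order.TTheory GRing.Theory Num.Theory.
Local Open Scope ring_scope.

Section Defs.
Variable R : realFieldType.

Definition pair4 (eta v : 'rV[R]_4) : R := \sum_(k < 4) eta 0 k * v 0 k.

Definition vec4 (a b c d : R) : 'rV[R]_4 :=
  \row_(k < 4) nth 0 [:: a; b; c; d] k.

Definition proj_eq (u w : 'rV[R]_4) : Prop :=
  u != 0 /\ exists c : R, c != 0 /\ w = c *: u.

(* A quadruple of flags F = (V_m, eta_m)_{m=1..4}, given by lifts
   V m, eta m (indices m : 'I_4, i.e. 0..3 stand for 1..4). *)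
Definition flags4 (V eta : 'I_4 -> 'rV[R]_4) : Prop :=
  forall m, V m != 0 /\ eta m != 0 /\ pair4 (eta m) (V m) = 0.

Definition nondeg4 (V eta : 'I_4 -> 'rV[R]_4) : Prop :=
  forall a b : 'I_4, pair4 (eta a) (V b) = 0 <-> a = b.

Definition rows4 (v : 'I_4 -> 'rV[R]_4) : 'M[R]_4 := \matrix_(m < 4, k < 4) v m 0 k.

(* A projective tetrahedron with vertices V_1..V_4 is
   T = { [sum_m t_m v_m] : t_m >= 0, not all 0 } for lifts v_m of V_m;
   its interior is { [sum_m t_m v_m] : all t_m > 0 }.
   [tet_lifts V eta v] : the lifts v define a projective tetrahedron with
   vertices V_m whose interior misses every plane eta_m. *)
Definition tet_lifts (V eta v : 'I_4 -> 'rV[R]_4) : Prop :=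
  (forall m, proj_eq (V m) (v m)) /\
  forall (m : 'I_4) (t : 'I_4 -> R), (forall n, 0 < t n) ->
    pair4 (eta m) (\sum_(n < 4) t n *: v n) != 0.

Definition tet_of_flags (V eta : 'I_4 -> 'rV[R]_4) : Prop :=
  [/\ flags4 V eta, nondeg4 V eta, \det (rows4 V) != 0 &
      exists v, tet_lifts V eta v].

Definition pgl_equiv (V eta V' eta' : 'I_4 -> 'rV[R]_4) : Prop :=
  exists A : 'M[R]_4, A \in unitmx /\
    forall m, proj_eq (V m *m A) (V' m) /\ proj_eq (eta m *m invmx A^T) (eta' m).

Definition tri_ratio (V eta : 'I_4 -> 'rV[R]_4) (a b c : 'I_4) : R :=
  pair4 (eta a) (V b) * pair4 (eta b) (V c) * pair4 (eta c) (V a) /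
  (pair4 (eta a) (V c) * pair4 (eta b) (V a) * pair4 (eta c) (V b)).

(* edge ratio e_{ab}, where (c,d) are such that [a b c d] is an even
   permutation of {1,2,3,4} (the caller supplies such c, d) *)
Definition edge_ratio (V eta : 'I_4 -> 'rV[R]_4) (a b c d : 'I_4) : R :=
  pair4 (eta a) (V c) * pair4 (eta b) (V d) /
  (pair4 (eta a) (V d) * pair4 (eta b) (V c)).

Definition o0 : 'I_4 := inord 0.
Definition o1 : 'I_4 := inord 1.
Definition o2 : 'I_4 := inord 2.
Definition o3 : 'I_4 := inord 3.

(* (V', eta') is the sigma-standard representative of the class of
   (V, eta), where sigma = [i j k l] = [s 1, s 2, s 3, s 4].
   Even-permutation bookkeeping for the edge ratios used:
     e_{ij}: [i j k l]; e_{jk}: [j k i l]; e_{ki}: [k i j l];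
     e_{il}: [i l j k]; e_{lj}: [l j i k]   (all even). *)
Definition std_rep (s : 'S_4) (V eta V' eta' : 'I_4 -> 'rV[R]_4) : Prop :=
  let i := s o0 in let j := s o1 in let k := s o2 in let l := s o3 in
  let ts := tri_ratio V eta i j k in
  let es := edge_ratio V eta i j k l in
  let e_jk := edge_ratio V eta j k i l in
  let e_ki := edge_ratio V eta k i j l in
  let e_il := edge_ratio V eta i l j k in
  let e_lj := edge_ratio V eta l j i k in
  let t_jil := tri_ratio V eta j i l in
  let mu := e_jk * e_ki - e_jk + 1 in
  let mub := e_il * e_lj - e_il + 1 in
  let X := mu * ts * es / (ts + 1) in
  let Y := (t_jil + 1) / (t_jil * mub) in
  [/\ pgl_equiv V eta V' eta',
      proj_eq (vec4 1 0 0 0) (V' i) /\ proj_eq (vec4 0 1 0 0) (eta' i),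
      proj_eq (vec4 0 1 0 0) (V' j) /\ proj_eq (vec4 1 0 0 0) (eta' j),
      proj_eq (vec4 1 1 1 0) (V' k) /\ proj_eq (vec4 ts 1 (- (ts + 1)) 0) (eta' k) &
      proj_eq (vec4 es 1 X (-1)) (V' l) /\
      proj_eq (vec4 (e_il * e_lj) 1 (- mub) (mub * (Y - X))) (eta' l)].

(* An orientation of RP^3 is induced by an orientation of R^4, encoded by
   o = 1 (standard) or o = -1 (opposite). The simplicial map from the
   standard simplex to the tetrahedron with lifts v (m-th vertex |-> V_m)
   is orientation preserving iff o * det(v_1,...,v_4) > 0. *)
Definition pos_oriented (o : R) (v : 'I_4 -> 'rV[R]_4) : Prop :=
  0 < o * \det (rows4 v).

End Defs.

(* Main.v *)
Require Import Defs.
From HB Require Import structures.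
From mathcomp Require Import all_boot all_order all_algebra all_fingroup.
From mathcomp Require Import ring lra.
Import Order.TTheory GRing.Theory Num.Theory.
Local Open Scope ring_scope.

Section Aux.
Variable R : realFieldType.

Lemma vo0 : nat_of_ord o0 = 0%N. Proof. by rewrite /o0 inordK. Qed.
Lemma vo1 : nat_of_ord o1 = 1%N. Proof. by rewrite /o1 inordK. Qed.
Lemma vo2 : nat_of_ord o2 = 2%N. Proof. by rewrite /o2 inordK. Qed.
Lemma vo3 : nat_of_ord o3 = 3%N. Proof. by rewrite /o3 inordK. Qed.

Lemma sum4 (F : 'I_4 -> R) : \sum_(m < 4) F m = F o0 + F o1 + F o2 + F o3.
Proof.
rewrite !big_ord_recl big_ord0 addr0 !addrA.
by congr (F _ + F _ + F _ + F _); apply: ord_inj; rewrite ?vo0 ?vo1 ?vo2 ?vo3.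
Qed.

Lemma pairE (x y a b c d a' b' c' d' : R) :
  pair4 (x *: vec4 a b c d) (y *: vec4 a' b' c' d') =
  x * y * (a * a' + b * b' + c * c' + d * d').
Proof.
rewrite /pair4 sum4 !mxE vo0 vo1 vo2 vo3 /=; ring.
Qed.

Lemma pair_lin (e : 'rV[R]_4) (t : 'I_4 -> R) (w : 'I_4 -> 'rV[R]_4) :
  pair4 e (\sum_(n < 4) t n *: w n) = \sum_(n < 4) t n * pair4 e (w n).
Proof.
rewrite /pair4.
transitivity (\sum_(k < 4) \sum_(n < 4) t n * (e 0 k * w n 0 k)).
  apply: eq_bigr => k _; rewrite summxE mulr_sumr; apply: eq_bigr => n _.
  by rewrite mxE mulrCA.
by rewrite exchange_big; apply: eq_bigr => n _; rewrite mulr_sumr.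
Qed.

Lemma opp3 (x y z : R) : x * y < 0 ->
  exists T1 T2 T3 : R, [/\ 0 < T1, 0 < T2, 0 < T3 & T1 * x + T2 * y + T3 * z = 0].
Proof.
move=> Hxy.
have [hx|hx] := ltP 0 x.
  have hy : y < 0 by rewrite -(pmulr_rlt0 _ hx).
  have y0 : y != 0 by rewrite ltr0_neq0.
  have x0 : x != 0 by rewrite gt_eqF.
  have [hz|hz] := leP 0 z.
    exists 1, ((x + z) / (- y)), 1; split => //.
      by apply: divr_gt0; lra.
    by field; rewrite ?oppr_eq0.
  exists (- (y + z) / x), 1, 1; split => //.
    by apply: divr_gt0; lra.
  by field; rewrite ?oppr_eq0.
have x0 : x != 0 by apply/negP => /eqP x0; move: Hxy; rewrite x0 mul0r ltxx.
have hx' : x < 0 by rewrite lt_neqAle x0.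
have hy : 0 < y by rewrite -(nmulr_rlt0 _ hx').
have y0 : y != 0 by rewrite gt_eqF.
have [hz|hz] := leP 0 z.
  exists ((y + z) / (- x)), 1, 1; split => //.
    by apply: divr_gt0; lra.
  by field; rewrite ?oppr_eq0.
exists 1, (- (x + z) / y), 1; split => //.
  by apply: divr_gt0; lra.
by field; rewrite ?oppr_eq0.
Qed.


Lemma ss3 (x y z : R) :
  (forall T1 T2 T3 : R, 0 < T1 -> 0 < T2 -> 0 < T3 -> T1 * x + T2 * y + T3 * z != 0) ->
  x != 0 -> y != 0 -> 0 < x * y.
Proof.
move=> H x0 y0; case: (ltP 0 (x * y)) => // h.
have : x * y < 0 by rewrite lt_neqAle mulf_neq0.
move=> /(@opp3 x y z) [T1 [T2 [T3 [h1 h2 h3 E]]]].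
by move: (H T1 T2 T3 h1 h2 h3); rewrite E eqxx.
Qed.

Lemma pos_cancel (k u : R) : k != 0 -> 0 < (k * k) * u -> 0 < u.
Proof.
move=> k0; have hk : 0 < k * k by rewrite -expr2 exprn_even_gt0 //= k0 orbT.
by rewrite pmulr_rgt0.
Qed.

Lemma ord4_cases (i : 'I_4) : [\/ i = o0, i = o1, i = o2 | i = o3].
Proof.
case: i => [[|[|[|[|i]]]] Hi] //.
- by constructor 1; apply: ord_inj; rewrite vo0.
- by constructor 2; apply: ord_inj; rewrite vo1.
- by constructor 3; apply: ord_inj; rewrite vo2.
- by constructor 4; apply: ord_inj; rewrite vo3.
Qed.

Lemma prod4 (F : 'I_4 -> R) : \prod_(m < 4) F m = F o0 * F o1 * F o2 * F o3.
Proof.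
rewrite !big_ord_recl big_ord0 mulr1 !mulrA.
by congr (F _ * F _ * F _ * F _); apply: ord_inj; rewrite ?vo0 ?vo1 ?vo2 ?vo3.
Qed.

Lemma reind (e : 'rV[R]_4) (s : 'S_4) (v : 'I_4 -> 'rV[R]_4) :
  (forall t : 'I_4 -> R, (forall n, 0 < t n) -> pair4 e (\sum_(n < 4) t n *: v n) != 0) ->
  forall A B C D : R, 0 < A -> 0 < B -> 0 < C -> 0 < D ->
  A * pair4 e (v (s o0)) + B * pair4 e (v (s o1)) + C * pair4 e (v (s o2))
  + D * pair4 e (v (s o3)) != 0.
Proof.
move=> H A B C D hA hB hC hD.
pose T := fun m : 'I_4 => nth 1 [:: A; B; C; D] m.
have := H (fun n => T (s^-1 n)%g).
rewrite pair_lin (reindex_inj (@perm_inj _ s)) /= sum4 !permK /T vo0 vo1 vo2 vo3 /=.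
apply; move=> n; rewrite /T; case: (s^-1 n)%g => [[|[|[|[|k]]]] /= _] //.
Qed.

Lemma core (s : 'S_4) (so : ~~ odd_perm s) (v : 'I_4 -> 'rV[R]_4) (a b c d p q es X : R) :
  a != 0 -> b != 0 -> c != 0 -> d != 0 -> p != 0 -> q != 0 ->
  v (s o0) = a *: vec4 1 0 0 0 -> v (s o1) = b *: vec4 0 1 0 0 ->
  v (s o2) = c *: vec4 1 1 1 0 -> v (s o3) = d *: vec4 es 1 X (-1) ->
  (forall t : 'I_4 -> R, (forall n, 0 < t n) ->
     pair4 (p *: vec4 0 1 0 0) (\sum_(n < 4) t n *: v n) != 0) ->
  (forall t : 'I_4 -> R, (forall n, 0 < t n) ->
     pair4 (q *: vec4 1 0 0 0) (\sum_(n < 4) t n *: v n) != 0) ->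
  0 < - \det (rows4 v).
Proof.
move=> a0 b0 c0 d0 p0 q0 E0 E1 E2 E3 Hi Hj.
have Ri := reind _ s _ Hi; have Rj := reind _ s _ Hj.
rewrite E0 E1 E2 E3 !pairE in Ri Rj.
have Hbc : 0 < (p * b) * (p * c).
  apply: ss3 (p * d) _ _ _; rewrite ?mulf_neq0 // => T1 T2 T3 h1 h2 h3.
  move: (Ri 1 T1 T2 T3 ltr01 h1 h2 h3); apply: contra => /eqP E; apply/eqP.
  by rewrite -[RHS]E; ring.
have Hcd : 0 < (p * c) * (p * d).
  apply: ss3 (p * b) _ _ _; rewrite ?mulf_neq0 // => T1 T2 T3 h1 h2 h3.
  move: (Ri 1 T3 T1 T2 ltr01 h3 h1 h2); apply: contra => /eqP E; apply/eqP.
  by rewrite -[RHS]E; ring.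
have Hac : 0 < (q * a) * (q * c).
  apply: ss3 (q * d * es) _ _ _; rewrite ?mulf_neq0 // => T1 T2 T3 h1 h2 h3.
  move: (Rj T1 1 T2 T3 h1 ltr01 h2 h3); apply: contra => /eqP E; apply/eqP.
  by rewrite -[RHS]E; ring.
have bc : 0 < b * c.
  apply: (pos_cancel _ _ p0); have -> : p * p * (b * c) = p * b * (p * c) by ring.
  exact: Hbc.
have cd : 0 < c * d.
  apply: (pos_cancel _ _ p0); have -> : p * p * (c * d) = p * c * (p * d) by ring.
  exact: Hcd.
have ac : 0 < a * c.
  apply: (pos_cancel _ _ q0); have -> : q * q * (a * c) = q * a * (q * c) by ring.
  exact: Hac.
have bd : 0 < b * d.
  apply: (pos_cancel _ _ c0); have -> : c * c * (b * d) = (b * c) * (c * d) by ring.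
  exact: mulr_gt0.
have abcd : 0 < (a * c) * (b * d) by exact: mulr_gt0.
have Ed : \det (rows4 v) = \det (rows4 (fun m => v (s m))).
  have -> : rows4 (fun m => v (s m)) = perm_mx s *m rows4 v.
    by rewrite -row_permE; apply/matrixP => i j; rewrite !mxE.
  by rewrite det_mulmx det_perm (negbTE so) expr0 mul1r.
rewrite Ed det_trig ?prod4.
  rewrite /rows4 !mxE /= E0 E1 E2 E3 !mxE ?vo0 ?vo1 ?vo2 ?vo3 /=.
  have -> : - (a * 1 * (b * 1) * (c * 1) * (d * -1)) = (a * c) * (b * d) by ring.
  exact: abcd.
apply/is_trig_mxP => i j.
case: (ord4_cases i) => ->; case: (ord4_cases j) => ->;
  rewrite ?vo0 ?vo1 ?vo2 ?vo3 // => _;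
  by rewrite /rows4 !mxE /= ?E0 ?E1 ?E2 ?E3 !mxE ?vo0 ?vo1 ?vo2 ?vo3 /= mulr0.
Qed.


End Aux.

Theorem lemma2p7 (R : realFieldType) :
  exists o : R, (o = 1 \/ o = -1) /\
    forall s : 'S_4, ~~ odd_perm s ->
    forall V eta : 'I_4 -> 'rV[R]_4, tet_of_flags V eta ->
    forall V' eta' : 'I_4 -> 'rV[R]_4, std_rep s V eta V' eta' ->
    forall v : 'I_4 -> 'rV[R]_4, tet_lifts V' eta' v ->
      pos_oriented o v.
Proof.
exists (-1); split; first by right.
move=> s so V eta _ V' eta' Hstd v [Hv Ht].
case: Hstd => _ [[_ [ai [ai0 Ai]]] [_ [p [p0 Ei]]]]
  [[_ [aj [aj0 Aj]]] [_ [q [q0 Ej]]]] [[_ [ak [ak0 Ak]]] _] [[_ [al [al0 Al]]] _].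
case: (Hv (s o0)) => _ [ci [ci0 Ci]].
case: (Hv (s o1)) => _ [cj [cj0 Cj]].
case: (Hv (s o2)) => _ [ck [ck0 Ck]].
case: (Hv (s o3)) => _ [cl [cl0 Cl]].
rewrite /pos_oriented mulN1r.
apply: (@core R s so v (ci * ai) (cj * aj) (ck * ak) (cl * al) p q);
  rewrite ?mulf_neq0 //.
- by rewrite Ci Ai scalerA.
- by rewrite Cj Aj scalerA.
- by rewrite Ck Ak scalerA.
- by rewrite Cl Al scalerA.
- by move=> t ht; rewrite -Ei; apply: Ht.
- by move=> t ht; rewrite -Ej; apply: Ht.
Qed.
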